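(* Let $X=(X_t)_{t\in\mathbb N}$ be a time-homogeneous Markov chain on a finite state space $\mathcal S$ with column-stochastic transition matrix $M$, $M_{zx}=\mathbb P(X_{t+1}=z\mid X_t=x)$. Let $\{\mathcal S_1,\dots,\mathcal S_k\}$ be a partition of $\mathcal S$ and $\pi:\mathcal S\to\{\mathcal S_1,\dots,\mathcal S_k\}$ the map with $\pi(x)=\mathcal S_i$ iff $x\in\mathcal S_i$. Suppose that for every $i$, $$M_{zx}=M_{zx'}\quad\text{for all }x,x'\in\mathcal S_i\text{ and all }z\in\mathcal S\setminus\mathcal S_i.$$ Then $X$ is lumpable with respect to the partition, i.e. $\pi\circ X=(\pi(X_t))_t$ is a Markov chain for every initial distribution of $X_0$. *)

(* Defs.v *)
(* Finite Markov chains described by their finite-dimensional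
   path laws (no measure theory needed: state spaces are finite). *)
From HB Require Import structures.
From mathcomp Require Import all_boot all_order all_algebra.
Set Implicit Arguments. Unset Strict Implicit. Unset Printing Implicit Defensive.
Import Order.TTheory GRing.Theory Num.Theory.
Local Open Scope ring_scope.

(* column-stochastic matrix: M z x = P(X_{t+1} = z | X_t = x) *)
Definition col_stochastic (R : numDomainType) (T : finType) (M : T -> T -> R) :=
  (forall z x, 0 <= M z x) /\ (forall x, \sum_(z : T) M z x = 1).

Definition distribution (R : numDomainType) (T : finType) (mu : T -> R) :=
  (forall x, 0 <= mu x) /\ \sum_(x : T) mu x = 1.

Fixpoint path_weight (R : numDomainType) (T : finType) (M : T -> T -> R)
  (x : T) (ys : seq T) : R :=
  match ys with
  | [::] => 1
  | y :: ys' => M y x * path_weight M y ys'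
  end.

(* law of the chain with initial distribution mu and transition matrix M:
   chain_law mu M x0 xs = P(X_0 = x0, X_1 = xs_0, ..., X_n = xs_{n-1}) *)
Definition chain_law (R : numDomainType) (T : finType) (mu : T -> R)
  (M : T -> T -> R) (x0 : T) (xs : seq T) : R :=
  mu x0 * path_weight M x0 xs.

(* law of the projected process pi o X:
   P(pi X_0 = b0, pi X_1 = bs_0, ..., pi X_n = bs_{n-1}) *)
Definition lumped_law (R : numDomainType) (T B : finType) (mu : T -> R)
  (M : T -> T -> R) (pi : T -> B) (b0 : B) (bs : seq B) : R :=
  \sum_(x0 : T | pi x0 == b0)
    \sum_(t : (size bs).-tuple T | map pi (tval t) == bs) chain_law mu M x0 (tval t).

(* A process on a finite state space B, given by its finite-dimensional laws
   P b0 bs = P(Y_0 = b0, Y_1 = bs_0, ...), is a (time-homogeneous) Markov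
   chain: there is a column-stochastic transition matrix N with
   P(Y_0..Y_n, Y_{n+1} = b) = P(Y_0..Y_n) * N b Y_n. *)
Definition is_markov_chain (R : numDomainType) (B : finType)
  (P : B -> seq B -> R) :=
  exists N : B -> B -> R, col_stochastic N /\
    forall (b0 : B) (bs : seq B) (b : B),
      P b0 (rcons bs b) = P b0 bs * N b (last b0 bs).

(* Main.v *)
Require Import Defs.
From HB Require Import structures.
From mathcomp Require Import all_boot all_order all_algebra.
Import Order.TTheory GRing.Theory Num.Theory.
Local Open Scope ring_scope.

Lemma tuple_sum_cons (R : numDomainType) (S : finType) (n : nat)
  (P : seq S -> bool) (F : seq S -> R) :
  \sum_(t : n.+1.-tuple S | P (tval t)) F (tval t) =
  \sum_(x : S) \sum_(t : n.-tuple S | P (x :: tval t)) F (x :: tval t).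
Proof.
rewrite [RHS]pair_big_dep /=.
rewrite (reindex (fun p : S * n.-tuple S => [tuple of p.1 :: p.2])) /=.
  by apply: eq_bigl => -[x t].
exists (fun t : n.+1.-tuple S => (thead t, [tuple of behead t])).
  move=> [x t] _ /=; rewrite theadE; congr pair; exact: val_inj.
move=> t _ /=; by rewrite -tuple_eta.
Qed.

Section Lump.
Variables (R : realFieldType) (S : finType) (k : nat)
  (M : S -> S -> R) (pi : S -> 'I_k).

Definition F (x0 : S) (bs : seq 'I_k) : R :=
  \sum_(t : (size bs).-tuple S | map pi (tval t) == bs) path_weight M x0 (tval t).

Lemma F_nil x0 : F x0 [::] = 1.
Proof.
rewrite /F /= (big_pred1 [tuple]) //= => t.
by rewrite [t]tuple0 /= !eqxx.
Qed.

Lemma F_cons x0 b bs :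
  F x0 (b :: bs) = \sum_(y | pi y == b) M y x0 * F y bs.
Proof.
rewrite /F /= (@tuple_sum_cons R S (size bs) (fun s => map pi s == b :: bs)
  (fun s => path_weight M x0 s)) /=.
rewrite (bigID (fun y => pi y == b)) /=.
rewrite [X in _ + X]big1 ?addr0; last first.
  move=> y /negbTE hy; apply: big1 => t; by rewrite eqseq_cons hy.
apply: eq_bigr => y /eqP hy; rewrite big_distrr /=.
apply: eq_bigl => t; by rewrite eqseq_cons hy eqxx.
Qed.

End Lump.

Theorem mainTheorem12 (R : realFieldType) (S : finType) (k : nat)
  (M : S -> S -> R) (pi : S -> 'I_k) :
  col_stochastic M ->
  (forall i : 'I_k, exists x : S, pi x = i) ->
  (forall x x' z : S, pi x = pi x' -> pi z != pi x -> M z x = M z x') ->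
  forall mu : S -> R, distribution mu ->
    is_markov_chain (lumped_law mu M pi).
Proof.
move=> [Mge0 Msum] surj Hl mu _.
pose N (b a : 'I_k) : R :=
  if [pick x | pi x == a] is Some x then \sum_(z | pi z == b) M z x
  else (b == a)%:R.
have key : forall x b, \sum_(z | pi z == b) M z x = N b (pi x).
  move=> x b; rewrite /N; case: pickP => [x' /eqP hx'|]; last by move/(_ x); rewrite eqxx.
  have eqo : forall c, c != pi x ->
      \sum_(z | pi z == c) M z x = \sum_(z | pi z == c) M z x'.
    move=> c hc; apply: eq_bigr => z /eqP hz; apply: Hl; first by rewrite hx'.
    by rewrite hz.
  have [->|hb] := eqVneq b (pi x); last exact: eqo.
  have tot : forall y, \sum_(z | pi z == pi x) M z y =
      1 - \sum_(z | pi z != pi x) M z y.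
    by move=> y; rewrite -(Msum y) (bigID (fun z => pi z == pi x) predT) /= addrK.
  rewrite !tot; congr (_ - _).
  apply: eq_bigr => z hz; apply: Hl; first by rewrite hx'.
  exact: hz.
exists N; split.
  split.
    move=> b a; rewrite /N; case: pickP => [x _|_]; last by rewrite ler0n.
    by apply: sumr_ge0 => z _.
  move=> a; rewrite /N; case: pickP => [x _|]; last first.
    by have [x hx] := surj a; move/(_ x); rewrite hx eqxx.
  rewrite -(Msum x) (partition_big pi predT) //=.
have Frc : forall bs x0 b,
    @F R S k M pi x0 (rcons bs b) = @F R S k M pi x0 bs * N b (last (pi x0) bs).
  elim=> [|b1 bs IH] x0 b.
    by rewrite /= F_cons F_nil mul1r; under eq_bigr do rewrite F_nil mulr1; exact: key.
  rewrite rcons_cons !F_cons big_distrl /=.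
  apply: eq_bigr => y /eqP hy; by rewrite IH mulrA hy.
move=> b0 bs b.
rewrite /lumped_law big_distrl /=.
apply: eq_bigr => x0 /eqP hx0.
have := Frc bs x0 b; rewrite /F hx0 /chain_law -!big_distrr /= => ->.
by rewrite mulrA.
Qed.
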